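(* For every $k\ge1$ there exists a clean universal $k$-URA $\mathcal A_k$ over $(\mathbb N;=)$ and the singleton alphabet $\Sigma=\{\sigma\}$ together with a configuration reachable in $\mathcal A_k$ that contains at least $k!$ distinct states with the same location. In particular $N_k\ge k!$.
   Context: Let $\Sigma$ be a finite alphabet; data words are finite sequences in $(\Sigma\times\mathbb N)^*$. Let $\mathbb N_\bot=\mathbb N\cup\{\bot\}$, $\bot$ equal only to itself. Register constraints over registers $\mathcal R$ are Boolean combinations of atoms $t_1=t_2$ with $t_i\in\{\#\}\cup\{r,\dot r:r\in\mathcal R\}$, interpreted on triples $(\mathbf u,d,\mathbf v)$ (current valuation, input datum, next valuation, valuations $\mathcal R\to\mathbb N_\bot$). A $k$-RA over $(\mathbb N;=)$ is $(\mathcal R,\mathcal L,\ell_{init},\mathcal L_{acc},E)$ with $|\mathcal R|=k$, finite locations, finite edges $(\ell,\sigma,\phi,\ell')$ whose constraints contain for each register $r$ a conjunct $\dot r=r$ or $\dot r=\#$. States are $\ell(\mathbf u)$; the initial state is $\ell_{init}$ with all registers $\bot$; $\ell(\mathbf u)\xrightarrow{\sigma,d}\ell'(\mathbf u')$ if some edge $(\ell,\sigma,\phi,\ell')$ has $(\mathbf u,d,\mathbf u')\models\phi$. A word is accepted from a state if some run on it from that state ends in a state with location in $\mathcal L_{acc}$; $L(\mathcal A)$: words accepted from the initial state; universal means $L(\mathcal A)=(\Sigma\times\mathbb N)^*$. A $k$-URA is a $k$-RA where each data word has at most one initialized accepting run. Clean: every reachable state $\ell(u_1,\dots,u_k)$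 accepts some word and no element of $\mathbb N$ occurs in two different components of $(u_1,\dots,u_k)$. A configuration is a set of states; $\mathrm{succ}(C,(\sigma,d))$ is the set of states reachable by one transition on $(\sigma,d)$ from a state in $C$, extended to words; $C$ is reachable if $C=\mathrm{succ}(\{\text{initial state}\},w)$ for some $w$. $N_k$ denotes the supremum, over all clean universal $k$-URA over $(\mathbb N;=)$ and all their reachable configurations $C$, of the maximal number of distinct states in $C$ sharing the same location. *)

(* Defs.v *)
From Stdlib Require List.
From mathcomp Require Import all_boot.
Set Implicit Arguments. Unset Strict Implicit. Unset Printing Implicit Defensive.

Section RA.
Variables (k : nat) (Sigma : Type).

(* A valuation R -> N_bot, registers R = 'I_k, bot = None. *)
Definition valuation := {ffun 'I_k -> option nat}.

(* terms of register constraints: #, r (current), r-dot (next) *)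
Inductive term := Tdat | Tcur of 'I_k | Tnext of 'I_k.

Inductive constr :=
| CAtom of term & term
| CTrue
| CNot of constr
| CAnd of constr & constr
| COr of constr & constr.

Definition eval_term (u : valuation) (d : nat) (v : valuation) (t : term)
  : option nat :=
  match t with Tdat => Some d | Tcur r => u r | Tnext r => v r end.

(* (u, d, v) |= phi ; bot is equal only to itself (option equality) *)
Fixpoint sat (c : constr) (u : valuation) (d : nat) (v : valuation) : Prop :=
  match c with
  | CAtom t1 t2 => eval_term u d v t1 = eval_term u d v t2
  | CTrue => True
  | CNot c1 => ~ sat c1 u d v
  | CAnd c1 c2 => sat c1 u d v /\ sat c2 u d v
  | COr c1 c2 => sat c1 u d v \/ sat c2 u d v
  end.

Fixpoint has_conjunct (c a : constr) : Prop :=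
  c = a \/ match c with
           | CAnd c1 c2 => has_conjunct c1 a \/ has_conjunct c2 a
           | _ => False
           end.

Definition edge_constr_wf (c : constr) : Prop :=
  forall r : 'I_k,
    has_conjunct c (CAtom (Tnext r) (Tcur r)) \/ has_conjunct c (CAtom (Tcur r) (Tnext r))
    \/ has_conjunct c (CAtom (Tnext r) Tdat) \/ has_conjunct c (CAtom Tdat (Tnext r)).

Record RA (n : nat) := MkRA {
  ra_init : 'I_n;
  ra_acc : pred 'I_n;
  ra_edges : seq ('I_n * Sigma * constr * 'I_n);
  ra_edges_wf : forall l a c l', List.In (l, a, c, l') ra_edges -> edge_constr_wf c
}.

Definition word := seq (Sigma * nat).

Section Sem.
Variables (n : nat) (A : RA n).

Definition state := ('I_n * valuation)%type.

Definition init_state : state := (ra_init A, [ffun _ => None]).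

Definition step (s : state) (x : Sigma * nat) (s' : state) : Prop :=
  exists c, List.In (s.1, x.1, c, s'.1) (ra_edges A) /\ sat c s.2 x.2 s'.2.

(* rho = the states visited after the starting state s, one per letter *)
Fixpoint run_from (s : state) (w : word) (rho : seq state) : Prop :=
  match w, rho with
  | [::], [::] => True
  | x :: w', s' :: rho' => step s x s' /\ run_from s' w' rho'
  | _, _ => False
  end.

Definition accepting_run (s : state) (w : word) (rho : seq state) : Prop :=
  run_from s w rho /\ ra_acc A (last s rho).1.

Definition accepts_from (s : state) (w : word) : Prop :=
  exists rho, accepting_run s w rho.

Definition universal : Prop := forall w : word, accepts_from init_state w.

Definition unambiguous : Prop :=
  forall (w : word) rho1 rho2,
    accepting_run init_state w rho1 -> accepting_run init_state w rho2 -> rho1 = rho2.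

Definition in_conf (w : word) (s : state) : Prop :=
  exists rho, run_from init_state w rho /\ last init_state rho = s.

Definition reachable_state (s : state) : Prop := exists w, in_conf w s.

Definition clean : Prop :=
  forall s : state, reachable_state s ->
    (exists w, accepts_from s w) /\
    (forall (i j : 'I_k) (d : nat), i != j -> s.2 i = Some d -> s.2 j <> Some d).

End Sem.
End RA.

(* Main.v *)
Require Import Defs.
From HB Require Import structures.
From Stdlib Require Import Classical_Prop.
From mathcomp Require Import all_boot fingroup perm.
Set Implicit Arguments. Unset Strict Implicit. Unset Printing Implicit Defensive.
Section S.
Variable k' : nat.
Local Notation K := k'.+1.
Inductive Loc := LI | LA of {perm 'I_K} & 'I_K | LB of 'I_K | LF | LNA of 'I_K | LNB of {set 'I_K} | LNS.
Definition Lcode := (unit + ({perm 'I_K} * 'I_K) + 'I_K + unit + 'I_K + {set 'I_K} + unit)%type.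
Definition encL (l : Loc) : Lcode :=
  match l with
  | LI => inl (inl (inl (inl (inl (inl tt)))))
  | LA p t => inl (inl (inl (inl (inl (inr (p, t))))))
  | LB j => inl (inl (inl (inl (inr j))))
  | LF => inl (inl (inl (inr tt)))
  | LNA t => inl (inl (inr t))
  | LNB X => inl (inr X)
  | LNS => inr tt end.
Definition decL (c : Lcode) : Loc :=
  match c with
  | inl (inl (inl (inl (inl (inl _))))) => LI
  | inl (inl (inl (inl (inl (inr (p, t)))))) => LA p t
  | inl (inl (inl (inl (inr j)))) => LB j
  | inl (inl (inl (inr _))) => LF
  | inl (inl (inr t)) => LNA t
  | inl (inr X) => LNB X
  | inr _ => LNS end.
Lemma encLK : cancel encL decL. Proof. by case. Qed.
HB.instance Definition _ := Finite.copy Loc (can_type encLK).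
Lemma cp : #|{perm 'I_K}| = K`!.
Proof. exact: card_Sn. Qed.

Definition vl := valuation K.
Definition cst := constr K.

Definition loadc (i : 'I_K) : cst := CAtom (Tnext i) (@Tdat K).
Definition keepc (i : 'I_K) : cst := CAtom (Tnext i) (Tcur i).
Definition foldc (a : 'I_K -> cst) (l : seq 'I_K) : cst :=
  List.fold_right (fun i c => CAnd (a i) c) (@CTrue K) l.
Definition regs (f : 'I_K -> bool) : cst :=
  foldc (fun i => if f i then loadc i else keepc i) (enum 'I_K).
Definition freshc (l : seq 'I_K) : cst :=
  foldc (fun i => CNot (CAtom (@Tdat K) (Tcur i))) l.
Definition eqc (j : 'I_K) : cst := CAtom (@Tdat K) (Tcur j).

Lemma In_mem (T : eqType) (x : T) (s : seq T) : x \in s -> List.In x s.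
Proof. elim: s => //= y s IH; rewrite inE => /orP [/eqP ->|/IH]; by [left|right]. Qed.
Lemma mem_In (T : eqType) (x : T) (s : seq T) : List.In x s -> x \in s.
Proof. elim: s => //= y s IH [->|/IH]; rewrite inE ?eqxx // => ->; by rewrite orbT. Qed.
Lemma In_enum (T : finType) (x : T) : List.In x (enum T).
Proof. by apply: In_mem; rewrite mem_enum. Qed.

Lemma sat_foldc a l u d v :
  sat (foldc a l) u d v <-> (forall i, List.In i l -> sat (a i) u d v).
Proof.
elim: l => [|i l IH] /=; first by split.
split.
  by move=> [H1 /IH H2] j [<-|Hj] //; apply: H2.
by move=> H; split; [apply: H; left | apply/IH => j Hj; apply: H; right].
Qed.

Lemma sat_regs f u d v :
  sat (regs f) u d v <-> v = [ffun i => if f i then Some d else u i].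
Proof.
rewrite sat_foldc; split.
  move=> H; apply/ffunP => i; rewrite ffunE.
  by have := H i (In_enum i); case: (f i).
move=> -> i _; case E: (f i) => /=; by rewrite ffunE E.
Qed.

Definition fresh (u : vl) d := forall i, u i <> Some d.

Lemma sat_freshc l u d v :
  sat (freshc l) u d v <-> (forall i, List.In i l -> u i <> Some d).
Proof.
rewrite sat_foldc; split => H i Hi /=.
  by move=> E; apply: (H i Hi); rewrite /= E.
by move=> /= E; apply: (H i Hi); rewrite -E.
Qed.

Lemma sat_fresh u d v : sat (freshc (enum 'I_K)) u d v <-> fresh u d.
Proof. rewrite sat_freshc; split => H i; [exact: H (In_enum i)|by move=> _; apply: H]. Qed.

Definition upd (u : vl) (r : 'I_K) d : vl := [ffun i => if i == r then Some d else u i].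

Definition locB (n : nat) : Loc := if n < K then LB (inord n) else LF.
Definition locA (p : {perm 'I_K}) (n : nat) : Loc := if n < K then LA p (inord n) else locB 0.
Definition locNA (n : nat) : Loc := if n < K then LNA (inord n) else LNB set0.

Definition keepall := regs (fun _ => false).

Definition trA (p : {perm 'I_K}) (t : 'I_K) : seq (cst * Loc) :=
  [:: (CAnd (regs (fun i => i == p t)) (freshc (enum 'I_K)), locA p t.+1)].
Definition trNA (t : 'I_K) : seq (cst * Loc) :=
  [:: (CAnd (regs (fun i => i == t)) (freshc (enum 'I_K)), locNA t.+1);
      (CAnd keepall (CNot (freshc (enum 'I_K))), LNS)].
Definition tr (l : Loc) : seq (cst * Loc) :=
  match l with
  | LI => trNA ord0 ++ List.flat_map (fun p => trA p ord0) (enum {perm 'I_K})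
  | LA p t => trA p t
  | LB j => [:: (CAnd keepall (eqc j), locB j.+1)]
  | LF => [:: (CAnd keepall (@CTrue K), LF)]
  | LNA t => trNA t
  | LNB X => List.map (fun i => (CAnd keepall (eqc i), LNB (X :|: [set i])))
               (List.filter (fun i => (i \notin X) && (X :|: [set i] != setT)) (enum 'I_K))
             ++ [:: (CAnd keepall (freshc (List.filter (fun i => i \notin X) (enum 'I_K))), LNS)]
  | LNS => [:: (CAnd keepall (@CTrue K), LNS)]
  end.

Definition acc (l : Loc) : bool := match l with LA _ _ | LB _ => false | _ => true end.

Definition stL := (Loc * vl)%type.
Definition stepL (s : stL) (d : nat) (s' : stL) : Prop :=
  exists c, List.In (c, s'.1) (tr s.1) /\ sat c s.2 d s'.2.

Lemma sat_keepall u d v : sat keepall u d v <-> v = u.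
Proof. rewrite sat_regs; split=> ->; apply/ffunP => i; by rewrite ffunE. Qed.


Lemma In1 (T : Type) (x y : T) : List.In x [:: y] <-> y = x.
Proof. split; first by move=> [->|[]]. by move=> ->; left. Qed.

Lemma stepA p t u d l' v : stepL (LA p t, u) d (l', v) <->
  fresh u d /\ l' = locA p t.+1 /\ v = upd u (p t) d.
Proof.
rewrite /stepL /=; split.
  by move=> [c [/In1 [<- <-] [/sat_regs -> /sat_fresh H]]].
move=> [H [-> ->]]; eexists; split; first by apply/In1.
by split; [apply/sat_regs|apply/sat_fresh].
Qed.

Lemma stepB j u d l' v : stepL (LB j, u) d (l', v) <->
  Some d = u j /\ l' = locB j.+1 /\ v = u.
Proof.
rewrite /stepL /=; split.
  by move=> [c [/In1 [<- <-] [/sat_keepall -> H]]].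
move=> [H [-> ->]]; eexists; split; first by apply/In1.
by split; [apply/sat_keepall|].
Qed.

Lemma stepF u d l' v : stepL (LF, u) d (l', v) <-> l' = LF /\ v = u.
Proof.
rewrite /stepL /=; split.
  by move=> [c [/In1 [<- <-] [/sat_keepall -> H]]].
move=> [-> ->]; eexists; split; first by apply/In1.
by split; [apply/sat_keepall|].
Qed.

Lemma stepNS u d l' v : stepL (LNS, u) d (l', v) <-> l' = LNS /\ v = u.
Proof.
rewrite /stepL /=; split.
  by move=> [c [/In1 [<- <-] [/sat_keepall -> H]]].
move=> [-> ->]; eexists; split; first by apply/In1.
by split; [apply/sat_keepall|].
Qed.

Lemma stepNA t u d l' v : stepL (LNA t, u) d (l', v) <->
  (fresh u d /\ l' = locNA t.+1 /\ v = upd u t d) \/ (~ fresh u d /\ l' = LNS /\ v = u).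
Proof.
rewrite /stepL /=; split.
  move=> [c [[E|[E|[]]] Hs]]; case: E Hs => <- <-.
    by move=> [/sat_regs -> /sat_fresh H]; left.
  by move=> [/sat_keepall -> H]; right; split => // Hf; apply: H; apply/sat_fresh.
move=> [[H [-> ->]]|[H [-> ->]]]; eexists; split.
- by left.
- by split; [apply/sat_regs|apply/sat_fresh].
- by right; left.
- by split; [apply/sat_keepall|move=> Hs; apply: H; move/sat_fresh: Hs].
Qed.

Lemma stepNB X u d l' v : stepL (LNB X, u) d (l', v) <->
  (exists i, i \notin X /\ X :|: [set i] != setT /\ Some d = u i /\
             l' = LNB (X :|: [set i]) /\ v = u)
  \/ ((forall i, i \notin X -> u i <> Some d) /\ l' = LNS /\ v = u).
Proof.
rewrite /stepL /=; split.
  move=> [c [Hin0 Hs]]; case: (List.in_app_or _ _ _ Hin0) => Hin.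
    have [i [E /List.filter_In [_ /andP [H1 H2]]]] := proj1 (List.in_map_iff _ _ _) Hin.
    case: E Hs => <- <- [/sat_keepall -> H]; left; by exists i.
  move: Hs; move/In1: Hin => [<- <-] [/sat_keepall -> /sat_freshc H]; right.
  split=> // i Hi; apply: H; apply/List.filter_In; split => //; exact: In_enum.
move=> [[i [H1 [H2 [H3 [-> ->]]]]]|[H [-> ->]]]; eexists; split.
- apply: List.in_or_app; left; apply/(List.in_map_iff _ _ _); exists i; split; first by [].
  by apply/List.filter_In; split; [exact: In_enum|rewrite H1 H2].
- by split; [apply/sat_keepall|].
- by apply: List.in_or_app; right; left.
- split; [by apply/sat_keepall|apply/sat_freshc => i /List.filter_In [_ Hi]; exact: H].
Qed.

Lemma stepI u d s' : stepL (LI, u) d s' <->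
  stepL (LNA ord0, u) d s' \/ exists p, stepL (LA p ord0, u) d s'.
Proof.
rewrite /stepL; split.
  move=> [c [Hin0 Hs]]; case: (List.in_app_or (trNA ord0) _ _ Hin0) => Hin; first by left; exists c.
  move/List.in_flat_map: Hin => [p [_ Hp]]; right; exists p; by exists c.
move=> [[c [Hin Hs]]|[p [c [Hin Hs]]]]; exists c; split => //; apply: (List.in_or_app (trNA ord0)).
  by left.
by right; apply/List.in_flat_map; exists p; split => //; exact: In_enum.
Qed.


Definition pinv (p : {perm 'I_K}) : {perm 'I_K} := (p^-1)%g.
Definition none : vl := [ffun _ => None].
Definition uA (p : {perm 'I_K}) (D : seq nat) : vl :=
  [ffun r => if pinv p r < size D then Some (nth 0 D (pinv p r)) else None].
Definition sA p D : stL := (locA p (size D), uA p D).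
Definition uN (D : seq nat) : vl :=
  [ffun r : 'I_K => if r < size D then Some (nth 0 D r) else None].
Definition sN D : stL := (locNA (size D), uN D).
Definition sB (v : vl) j : stL := (locB j, v).
Definition sI : stL := (LI, none).
Definition inj (u : vl) := forall i j d, u i = Some d -> u j = Some d -> i = j.

Lemma pinvK (p : {perm 'I_K}) x : pinv p (p x) = x.
Proof. by rewrite /pinv permK. Qed.
Lemma pinvK' (p : {perm 'I_K}) x : p (pinv p x) = x.
Proof. by rewrite /pinv permKV. Qed.

Lemma inord0 : inord 0 = ord0 :> 'I_K.
Proof. by apply: val_inj; rewrite /= inordK. Qed.

Lemma fresh_uA p D d : size D <= K -> fresh (uA p D) d <-> d \notin D.
Proof.
move=> HD; split.
  move=> H; apply/negP => Hd; apply: (H (p (inord (index d D)))).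
  have Hi : index d D < size D by rewrite index_mem.
  have HK : index d D < K := leq_trans Hi HD.
  by rewrite ffunE pinvK inordK // Hi nth_index.
move=> /negP Hd i; rewrite ffunE; case: ifP => // Hi [E]; apply: Hd.
by rewrite -E mem_nth.
Qed.

Lemma fresh_uN D d : size D <= K -> fresh (uN D) d <-> d \notin D.
Proof.
move=> HD; split.
  move=> H; apply/negP => Hd; apply: (H (inord (index d D))).
  have Hi : index d D < size D by rewrite index_mem.
  have HK : index d D < K := leq_trans Hi HD.
  by rewrite ffunE inordK // Hi nth_index.
move=> /negP Hd i; rewrite ffunE; case: ifP => // Hi [E]; apply: Hd.
by rewrite -E mem_nth.
Qed.

Lemma uA_rcons p D d : size D < K ->
  upd (uA p D) (p (inord (size D))) d = uA p (rcons D d).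
Proof.
move=> HD; apply/ffunP => i; rewrite !ffunE size_rcons ltnS.
case: eqP => [->|Hne].
  by rewrite pinvK inordK // leqnn nth_rcons ltnn eqxx.
have [E|Hne'] := eqVneq (val (pinv p i)) (size D).
  by exfalso; apply: Hne; rewrite -(pinvK' p i); congr (p _); apply: val_inj; rewrite /= inordK // E.
rewrite [pinv p i <= size D]leq_eqVlt (negbTE Hne') /=.
by case: ifP => // H; rewrite nth_rcons H.
Qed.

Lemma uN_rcons D d : size D < K -> upd (uN D) (inord (size D)) d = uN (rcons D d).
Proof.
move=> HD; apply/ffunP => i; rewrite !ffunE size_rcons ltnS.
case: eqP => [->|Hne].
  by rewrite inordK // leqnn nth_rcons ltnn eqxx.
have [E|Hne'] := eqVneq (val i) (size D).
  by exfalso; apply: Hne; apply: ord_inj; rewrite inordK // E.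
rewrite [i <= size D]leq_eqVlt (negbTE Hne') /=.
by case: ifP => // H; rewrite nth_rcons H.
Qed.

Lemma stepsA p D d s' : size D < K ->
  stepL (sA p D) d s' <-> d \notin D /\ s' = sA p (rcons D d).
Proof.
move=> HD; case: s' => l' v.
have -> : sA p D = (LA p (inord (size D)), uA p D) by rewrite /sA /locA HD.
rewrite stepA -(@fresh_uA p D d (ltnW HD)) inordK // uA_rcons //.
have -> : locA p (size D).+1 = (sA p (rcons D d)).1 by rewrite /= size_rcons.
by split => [[H [-> ->]]|[H [-> ->]]].
Qed.

Lemma stepsN D d l' v : size D < K ->
  stepL (sN D) d (l', v) <->
  (d \notin D /\ (l', v) = sN (rcons D d)) \/ (d \in D /\ (l', v) = (LNS, uN D)).
Proof.
move=> HD; have -> : sN D = (LNA (inord (size D)), uN D) by rewrite /sN /locNA HD.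
have E1 : sN (rcons D d) = (locNA (size D).+1, uN (rcons D d)) by rewrite /sN size_rcons.
have F := @fresh_uN D d (ltnW HD).
rewrite stepNA inordK // uN_rcons // E1.
split.
  case=> [[H [-> ->]]|[H [-> ->]]].
    by left; split => //; apply/F.
  right; split => //; apply/negPn/negP => Hd; apply: H; exact/F.
case=> [[H E]|[H E]]; case: E => -> ->.
  by left; split => //; apply/F.
by right; split => //; move/F; rewrite H.
Qed.

Lemma sA_full p D : size D = K -> sA p D = sB (uA p D) 0.
Proof. by move=> HD; rewrite /sA /locA HD ltnn. Qed.

Lemma sN_full D : size D = K -> sN D = (LNB set0, uN D).
Proof. by move=> HD; rewrite /sN /locNA HD ltnn. Qed.

Lemma sB_K v : sB v K = (LF, v).
Proof. by rewrite /sB /locB ltnn. Qed.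

Lemma stepsB v j d s' : j < K ->
  stepL (sB v j) d s' <-> Some d = v (inord j) /\ s' = sB v j.+1.
Proof.
move=> Hj; case: s' => l' v'; rewrite /sB {1}/locB Hj stepB inordK //.
by split => [[H [-> ->]]|[H [-> ->]]].
Qed.

Lemma none_uN : none = uN [::].
Proof. by apply/ffunP => i; rewrite !ffunE. Qed.
Lemma none_uA p : none = uA p [::].
Proof. by apply/ffunP => i; rewrite !ffunE. Qed.

Lemma stepsI d s' : stepL sI d s' <-> s' = sN [:: d] \/ exists p, s' = sA p [:: d].
Proof.
case: s' => l' v; rewrite /sI stepI; split.
  case=> [H|[p H]].
    left; move: H; rewrite -inord0 none_uN.
    have -> : (LNA (inord 0), uN [::]) = sN [::] by [].
    by rewrite stepsN // => -[[_ ->]|[]].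
  right; exists p; move: H; rewrite -inord0 (none_uA p).
  have -> : (LA p (inord 0), uA p [::]) = sA p [::] by [].
  by rewrite stepsA // => -[_ ->].
case=> [E|[p E]].
  left; rewrite -inord0 none_uN.
  have -> : (LNA (inord 0), uN [::]) = sN [::] by [].
  by rewrite stepsN //; left.
right; exists p; rewrite -inord0 (none_uA p).
have -> : (LA p (inord 0), uA p [::]) = sA p [::] by [].
by rewrite stepsA.
Qed.


Fixpoint runL (s : stL) (ds : seq nat) (rho : seq stL) : Prop :=
  match ds, rho with
  | [::], [::] => True
  | d :: ds', s' :: rho' => stepL s d s' /\ runL s' ds' rho'
  | _, _ => False
  end.
Definition accL s ds rho := runL s ds rho /\ acc (last s rho).1.

Lemma accL_cons s d ds s1 rho :
  stepL s d s1 -> accL s1 ds rho -> accL s (d :: ds) (s1 :: rho).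
Proof. by move=> H [H1 H2]. Qed.

Lemma LF_acc ds v : exists rho, accL (LF, v) ds rho.
Proof.
elim: ds => [|d ds [rho H]]; first by exists [::].
by exists ((LF, v) :: rho); apply: accL_cons => //; apply/stepF.
Qed.

Lemma LNS_acc ds v : exists rho, accL (LNS, v) ds rho.
Proof.
elim: ds => [|d ds [rho H]]; first by exists [::].
by exists ((LNS, v) :: rho); apply: accL_cons => //; apply/stepNS.
Qed.

Lemma B_exist es j (v : vl) rest : j + size es = K ->
  (forall q, q < size es -> v (inord (j + q)) = Some (nth 0 es q)) ->
  exists rho, accL (sB v j) (es ++ rest) rho.
Proof.
elim: es j => [|e es IH] j /=.
  by rewrite addn0 => -> _; rewrite sB_K; apply: LF_acc.
move=> Hs H.
have Hj : j < K by rewrite -Hs addnS ltnS leq_addr.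
have Hs' : j.+1 + size es = K by rewrite addSn -addnS.
have H' : forall q, q < size es -> v (inord (j.+1 + q)) = Some (nth 0 es q).
  by move=> q Hq; rewrite addSn -addnS (H q.+1).
have [rho Hr] := IH j.+1 Hs' H'.
exists (sB v j.+1 :: rho); apply: accL_cons => //.
by apply/stepsB => //; split => //; rewrite -(H 0) ?addn0.
Qed.

Lemma B_nec ds j (v : vl) rho : j <= K -> accL (sB v j) ds rho ->
  exists es rest, ds = es ++ rest /\ j + size es = K /\
  (forall q, q < size es -> v (inord (j + q)) = Some (nth 0 es q)).
Proof.
elim: ds j rho => [|d ds IH] j rho Hj [Hr Ha].
  case: rho Hr Ha => [|//] _ /=; rewrite /sB /locB; case: ifP => // Hjk _.
  exists [::], [::]; split => //; split => //; apply/eqP.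
  by rewrite addn0 eqn_leq Hj leqNgt Hjk.
have [{}Hj|Hge] := ltnP j K; last first.
  exists [::], (d :: ds); split => //; split => //; apply/eqP.
  by rewrite addn0 eqn_leq Hj Hge.
case: rho Hr Ha => [//|s1 rho] /= [H1 H2] Ha.
move/(stepsB _ _ _ Hj): H1 => [Hd Es1]; subst s1.
have [es [rest [-> [Hs H]]]] := IH j.+1 rho Hj (conj H2 Ha).
exists (d :: es), rest; split => //; split; first by rewrite /= addnS -addSn.
case=> [_|q Hq] /=; first by rewrite addn0.
by rewrite addnS -addSn H.
Qed.


Lemma notin_cat_cons (d0 d1 : seq nat) x : uniq (d0 ++ x :: d1) -> x \notin d0.
Proof. by rewrite cat_uniq /= => /and3P [_ /norP [H _] _]. Qed.

Lemma A_exist d1 p d0 es rest : uniq (d0 ++ d1) -> size (d0 ++ d1) = K -> size es = K ->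
  (forall q, q < K -> uA p (d0 ++ d1) (inord q) = Some (nth 0 es q)) ->
  exists rho, accL (sA p d0) (d1 ++ es ++ rest) rho.
Proof.
elim: d1 d0 => [|x d1 IH] d0 Hu Hs He H.
  rewrite cats0 in Hu Hs H; rewrite /= sA_full //; apply: B_exist; first by rewrite add0n He.
  by move=> q Hq; rewrite add0n H // -He.
have Hlt : size d0 < K by rewrite -Hs size_cat /= addnS ltnS leq_addr.
have Hx := notin_cat_cons Hu.
rewrite -cat_rcons in Hu Hs H.
have [rho Hr] := IH (rcons d0 x) Hu Hs He H.
exists (sA p (rcons d0 x) :: rho); apply: accL_cons => //.
by apply/stepsA.
Qed.

Lemma A_run d1 p d0 : uniq (d0 ++ d1) -> size (d0 ++ d1) <= K ->
  exists rho, runL (sA p d0) d1 rho /\ last (sA p d0) rho = sA p (d0 ++ d1).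
Proof.
elim: d1 d0 => [|x d1 IH] d0 Hu Hs; first by exists [::]; rewrite cats0.
have Hlt : size d0 < K by move: Hs; rewrite size_cat /= addnS => /(leq_trans _); apply; rewrite ltnS leq_addr.
have Hx := notin_cat_cons Hu.
rewrite -cat_rcons in Hu Hs *.
have [rho [Hr Hl]] := IH (rcons d0 x) Hu Hs.
exists (sA p (rcons d0 x) :: rho); split => //; split => //.
by apply/stepsA.
Qed.

Lemma A_nec ds p d0 rho : uniq d0 -> size d0 <= K -> accL (sA p d0) ds rho ->
  exists d1 es rest, ds = d1 ++ es ++ rest /\ uniq (d0 ++ d1) /\ size (d0 ++ d1) = K /\
    size es = K /\ (forall q, q < K -> uA p (d0 ++ d1) (inord q) = Some (nth 0 es q)).
Proof.
elim: ds d0 rho => [|x ds IH] d0 rho Hu Hs Hacc.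
  have [Hlt|Hge] := ltnP (size d0) K.
    move: Hacc => [Hr]; case: rho Hr => [|//] _.
    by rewrite /= /locA Hlt.
  have HK : size d0 = K by apply/eqP; rewrite eqn_leq Hs Hge.
  rewrite sA_full // in Hacc.
  have [es [rest [E [Hse H]]]] := B_nec (leq0n K) Hacc.
  exists [::], es, rest; rewrite cats0; split => //; split => //; split => //.
  rewrite add0n in Hse; split => // q Hq; rewrite -(add0n q) H // Hse //.
have [Hlt|Hge] := ltnP (size d0) K.
  move: Hacc => [Hr Ha]; case: rho Hr Ha => [//|s1 rho] /= [H1 H2] Ha.
  move/(stepsA _ _ _ Hlt): H1 => [Hx Es1]; subst s1.
  have Hu' : uniq (rcons d0 x) by rewrite rcons_uniq Hx Hu.
  have Hs' : size (rcons d0 x) <= K by rewrite size_rcons.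
  have [d1 [es [rest [-> [Hu2 [Hs2 [He H]]]]]]] := IH (rcons d0 x) rho Hu' Hs' (conj H2 Ha).
  rewrite cat_rcons in Hu2 Hs2 H.
  by exists (x :: d1), es, rest.
have HK : size d0 = K by apply/eqP; rewrite eqn_leq Hs Hge.
rewrite sA_full // in Hacc.
have [es [rest [E [Hse H]]]] := B_nec (leq0n K) Hacc.
exists [::], es, rest; rewrite cats0; split => //; split => //; split => //.
rewrite add0n in Hse; split => // q Hq; rewrite -(add0n q) H // Hse //.
Qed.


Lemma inj_uN D : uniq D -> inj (uN D).
Proof.
move=> Hu i j d; rewrite !ffunE; case: ifP => // Hi [Ei]; case: ifP => // Hj [Ej].
apply: ord_inj; apply/eqP; rewrite -(nth_uniq 0 Hi Hj Hu) Ei Ej //.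
Qed.

Lemma inj_uA p D : uniq D -> inj (uA p D).
Proof.
move=> Hu i j d; rewrite !ffunE; case: ifP => // Hi [Ei]; case: ifP => // Hj [Ej].
have E : pinv p i = pinv p j.
  apply: ord_inj; apply/eqP; rewrite -(nth_uniq 0 Hi Hj Hu) Ei Ej //.
by rewrite -(pinvK' p i) E pinvK'.
Qed.

Lemma NB_die (l : seq (ordinal K)) (X : {set ordinal K}) (v : vl) (f : 'I_K -> nat) rest rho : inj v ->
  (forall i, v i = Some (f i)) -> uniq l -> (forall i, i \in l -> i \notin X) ->
  (forall i, (i \in X) || (i \in l)) -> l != [::] ->
  ~ runL (LNB X, v) (map f l ++ rest) rho.
Proof.
move=> Hinj Hv.
elim: l X rho => [//|i l IH] X rho /= /andP [Hil Hu] Hd Hc _.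
case: rho => [//|[l1 v1] rho] [/stepNB H1 H2].
case: H1 => [[i0 [Hi0 [Hset [Heq [E1 E2]]]]]|[Hfr _]]; last first.
  by apply: (Hfr i (Hd i (mem_head _ _))); apply: Hv.
have Ei : i0 = i by apply: (Hinj i0 i (f i)) => //; rewrite -Heq.
subst i0 l1 v1.
case: l IH Hil Hu Hd Hc H2 => [|j l] IH Hil Hu Hd Hc H2.
  move/negP: Hset; apply; apply/eqP/setP => j.
  by rewrite in_setU in_set1 in_setT; have := Hc j; rewrite mem_seq1.
apply: (IH (X :|: [set i]) rho Hu _ _ _ H2) => //.
- move=> j0 Hj0; rewrite in_setU in_set1 negb_or; apply/andP; split.
    by apply: Hd; rewrite inE Hj0 orbT.
  by apply/eqP => E; subst j0; rewrite Hj0 in Hil.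
- move=> j0; rewrite in_setU in_set1; have := Hc j0; rewrite inE.
  by case: (j0 \in X) => //=; case: (j0 == i).
Qed.

Lemma NB_gen ds (X : {set ordinal K}) (v : vl) (f : 'I_K -> nat) : inj v -> (forall i, v i = Some (f i)) ->
  (exists rho, runL (LNB X, v) ds rho) \/
  exists l rest, uniq l /\ (forall i, i \in l -> i \notin X) /\
    (forall i, (i \in X) || (i \in l)) /\ ds = map f l ++ rest.
Proof.
move=> Hinj Hv; elim: ds X => [|x ds IH] X; first by left; exists [::].
case: (pickP (fun i => (i \notin X) && (f i == x))) => [i /andP [Hi /eqP Hfi]|Hno].
  case: (eqVneq (X :|: [set i]) setT) => Hset.
    right; exists [:: i], ds; split => //; split.
      by move=> j; rewrite inE => /eqP ->.
    split; last by rewrite /= Hfi.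
    move=> j; have : j \in X :|: [set i] by rewrite Hset in_setT.
    by rewrite in_setU in_set1 mem_seq1.
  case: (IH (X :|: [set i])) => [[rho Hr]|[l [rest [Hu [Hd [Hc E]]]]]].
    left; exists ((LNB (X :|: [set i]), v) :: rho); split => //.
    by apply/stepNB; left; exists i; rewrite Hv Hfi.
  right; exists (i :: l), rest; split.
    rewrite /= Hu andbT; apply/negP => Hil.
    by have := Hd i Hil; rewrite in_setU in_set1 eqxx orbT.
  split.
    move=> j; rewrite inE => /orP [/eqP ->//|Hj].
    by have := Hd j Hj; rewrite in_setU negb_or => /andP [].
  split; last by rewrite E /= Hfi.
  move=> j; have := Hc j; rewrite in_setU in_set1 inE.
  by case: (j \in X) => //=; case: (j == i).
have [rho Hr] := LNS_acc ds v.
left; exists ((LNS, v) :: rho); split; last by case: Hr.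
apply/stepNB; right; split => // i Hi; rewrite Hv => -[E].
by have := Hno i; rewrite Hi E eqxx.
Qed.


Lemma NA_die d1 d0 (l : seq 'I_K) rest rho : uniq (d0 ++ d1) -> size (d0 ++ d1) = K ->
  uniq l -> (forall i, i \in l) ->
  ~ runL (sN d0) (d1 ++ map (fun i : 'I_K => nth 0 (d0 ++ d1) i) l ++ rest) rho.
Proof.
elim: d1 d0 rho => [|x d1 IH] d0 rho Hu Hs Hl Hc.
  rewrite cats0 in Hu Hs *; rewrite sN_full //=.
  apply: NB_die => //.
  - exact: inj_uN.
  - by move=> i; rewrite ffunE Hs ltn_ord.
  - by move=> i _; rewrite in_set0.
  - by move=> i; rewrite Hc orbT.
  - by have := Hc ord0; case: l {Hl Hc}.
have Hlt : size d0 < K by rewrite -Hs size_cat /= addnS ltnS leq_addr.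
have Hx := notin_cat_cons Hu.
case: rho => [//|[l1 v1] rho] [H1 H2].
move/(stepsN _ _ _ Hlt): H1 => [[_ E]|[Hx' _]]; last by rewrite Hx' in Hx.
rewrite E in H2; rewrite -cat_rcons in Hu Hs H2.
exact: (IH (rcons d0 x) rho Hu Hs Hl Hc H2).
Qed.

Lemma NA_gen ds d0 : uniq d0 -> size d0 <= K ->
  (exists rho, runL (sN d0) ds rho) \/
  exists d1 (l : seq 'I_K) rest, uniq (d0 ++ d1) /\ size (d0 ++ d1) = K /\ uniq l /\
    (forall i, i \in l) /\ ds = d1 ++ map (fun i : 'I_K => nth 0 (d0 ++ d1) i) l ++ rest.
Proof.
elim: ds d0 => [|x ds IH] d0 Hu Hs.
  by left; exists [::].
have [Hlt|Hge] := ltnP (size d0) K.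
  case Hx: (x \in d0).
    have [rho [Hr _]] := LNS_acc ds (uN d0).
    left; exists ((LNS, uN d0) :: rho); split => //.
    by apply/(stepsN _ _ _ Hlt); right.
  have Hu' : uniq (rcons d0 x) by rewrite rcons_uniq Hx Hu.
  have Hs' : size (rcons d0 x) <= K by rewrite size_rcons.
  case: (IH _ Hu' Hs') => [[rho Hr]|[d1 [l [rest [H1 [H2 [H3 [H4 E]]]]]]]].
    left; exists (sN (rcons d0 x) :: rho); split => //.
    by apply/(stepsN _ _ _ Hlt); left; rewrite Hx.
  rewrite cat_rcons in H1 H2 E.
  by right; exists (x :: d1), l, rest; rewrite E.
have HK : size d0 = K by apply/eqP; rewrite eqn_leq Hs Hge.
rewrite sN_full //.
have Hv : forall i : 'I_K, uN d0 i = Some (nth 0 d0 i) by move=> i; rewrite ffunE HK ltn_ord.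
case: (NB_gen (x :: ds) set0 (inj_uN Hu) Hv) => [H|[l [rest [H1 [H2 [H3 E]]]]]]; first by left.
right; exists [::], l, rest; rewrite cats0; split => //; split => //; split => //; split => //.
by move=> i; have := H3 i; rewrite in_set0.
Qed.

Definition isN (l : Loc) := match l with LNA _ | LNB _ | LNS => true | _ => false end.

Lemma N_closed s d s' : isN s.1 -> stepL s d s' -> isN s'.1.
Proof.
case: s => l u; case: s' => l' v'; case: l => //= [t|X|] _.
- move/stepNA => [[_ [-> _]]|[_ [-> _]]] //.
  by rewrite /locNA; case: ifP.
- by move/stepNB => [[i [_ [_ [_ [-> _]]]]]|[_ [-> _]]].
- by move/stepNS => [-> _].
Qed.

Lemma N_acc ds s rho : isN s.1 -> runL s ds rho -> acc (last s rho).1.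
Proof.
elim: ds s rho => [|d ds IH] s [|s1 rho] //=.
- by case: s => [[]].
- by move=> Hs [H1 H2]; apply: IH H2; apply: N_closed H1.
Qed.

Definition Pf (p : {perm 'I_K}) (ds : seq nat) := exists D es rest,
  ds = D ++ es ++ rest /\ size D = K /\ uniq D /\ size es = K /\
  forall q, q < K -> nth 0 es q = nth 0 D (pinv p (inord q)).

Lemma Pf_uniq p1 p2 ds : Pf p1 ds -> Pf p2 ds -> p1 = p2.
Proof.
move=> [D1 [es1 [r1 [E1 [HD1 [Hu1 [He1 H1]]]]]]] [D2 [es2 [r2 [E2 [HD2 [Hu2 [He2 H2]]]]]]].
have /eqP := E2; rewrite E1 eqseq_cat ?HD1 ?HD2 // => /andP [/eqP ED /eqP].
move/eqP; rewrite eqseq_cat ?He1 ?He2 // => /andP [/eqP Ees _].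
subst D2 es2.
have Hp : forall j, pinv p1 j = pinv p2 j.
  move=> j; have := H1 j (ltn_ord j); rewrite H2 // inord_val => E.
  apply: ord_inj; apply/eqP; rewrite -(nth_uniq 0 _ _ Hu1) ?HD1 ?ltn_ord //.
  by rewrite E.
apply: invg_inj; apply/permP => j; exact: Hp.
Qed.

Lemma A_Pf p d ds rho : accL (sA p [:: d]) ds rho -> Pf p (d :: ds).
Proof.
move=> H; have [d1 [es [rest [E [Hu [Hs [He H']]]]]]] := A_nec (isT : uniq [:: d]) (isT : 1 <= K) H.
exists (d :: d1), es, rest; rewrite E; split => //; split => //; split => //; split => //.
move=> q Hq; have := H' q Hq; rewrite ffunE Hs ltn_ord => -[->] //.
Qed.

Lemma Pf_A p d ds : Pf p (d :: ds) -> exists rho, accL (sA p [:: d]) ds rho.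
Proof.
move=> [[|d' D] [es [rest [E [HD [Hu [He H]]]]]]] //.
case: E => -> ->; apply: (@A_exist D p [:: d'] es rest) => //.
by move=> q Hq; rewrite ffunE HD ltn_ord H.
Qed.

Lemma N_noPf p d ds rho : Pf p (d :: ds) -> ~ runL (sN [:: d]) ds rho.
Proof.
move=> [[|d' D] [es [rest [E [HD [Hu [He H]]]]]]] //.
case: E => Ed Eds; subst d' ds.
set l := [seq pinv p (inord q) | q <- iota 0 K].
have El : es = map (fun i : 'I_K => nth 0 (d :: D) i) l.
  apply: (@eq_from_nth _ 0); first by rewrite size_map size_map size_iota.
  move=> q; rewrite He => Hq.
  by rewrite (nth_map ord0) ?size_map ?size_iota // (nth_map 0) ?size_iota // nth_iota // H.
rewrite El; apply: (@NA_die D [:: d]) => //.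
- rewrite map_inj_in_uniq ?iota_uniq // => q1 q2; rewrite !mem_iota /= => Hq1 Hq2 /perm_inj E.
  by move: (congr1 (@nat_of_ord K) E); rewrite !inordK.
- move=> i; apply/mapP; exists (val (p i)); first by rewrite mem_iota /= ltn_ord.
  by rewrite inord_val pinvK.
Qed.

Lemma Pf_from_l D (l : seq 'I_K) rest : uniq D -> size D = K -> uniq l ->
  (forall i, i \in l) -> exists p, Pf p (D ++ map (fun i : 'I_K => nth 0 D i) l ++ rest).
Proof.
move=> Hu HD Hl Hc.
have Hsl : size l = K.
  have Heq : l =i enum 'I_K by move=> i; rewrite Hc mem_enum.
  have := uniq_perm Hl (enum_uniq 'I_K) Heq.
  by move/perm_size; rewrite size_enum_ord.
have ginj : injective (fun j : 'I_K => nth ord0 l j).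
  move=> i j E; apply: ord_inj; apply/eqP.
  by rewrite -(nth_uniq ord0 _ _ Hl) ?Hsl ?ltn_ord // E.
exists ((perm ginj)^-1)%g.
exists D, (map (fun i : 'I_K => nth 0 D i) l), rest; split => //; split => //; split => //.
split; first by rewrite size_map.
move=> q Hq; rewrite /pinv invgK permE inordK // (nth_map ord0) ?Hsl //.
Qed.


Lemma inj_upd u r d : inj u -> fresh u d -> inj (upd u r d).
Proof.
move=> Hi Hf i j e; rewrite !ffunE.
case: (eqVneq i r) => [->|Hir]; case: (eqVneq j r) => [->|Hjr] //.
- by move=> [<-] E; exfalso; apply: (Hf j).
- by move=> E [Ed]; rewrite -Ed in E; exfalso; apply: (Hf i).
- exact: Hi.
Qed.

Lemma loc_notLI (l : Loc) : (l = LI) = false -> True.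
Proof. by []. Qed.

Lemma locA_LI p n : locA p n <> LI.
Proof. by rewrite /locA /locB; case: ifP => //; case: ifP. Qed.
Lemma locB_LI n : locB n <> LI.
Proof. by rewrite /locB; case: ifP. Qed.
Lemma locNA_LI n : locNA n <> LI.
Proof. by rewrite /locNA; case: ifP. Qed.

Lemma det s d s1 s2 : s.1 <> LI -> inj s.2 -> stepL s d s1 -> stepL s d s2 ->
  s1 = s2 /\ s1.1 <> LI /\ inj s1.2.
Proof.
case: s => l u; case: s1 => l1 v1; case: s2 => l2 v2 /=.
case: l => [//|p t|j||t|X|] _ Hi.
- move=> /stepA [Hf [-> ->]] /stepA [_ [-> ->]]; split => //; split.
    exact: locA_LI.
  exact: inj_upd.
- move=> /stepB [_ [-> ->]] /stepB [_ [-> ->]]; split => //; split => //.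
  exact: locB_LI.
- by move=> /stepF [-> ->] /stepF [-> ->].
- move=> /stepNA [[Hf [-> ->]]|[Hf [-> ->]]] /stepNA [[Hf' [-> ->]]|[Hf' [-> ->]]] //.
  by split => //; split; [exact: locNA_LI|exact: inj_upd].
- move=> /stepNB [[i [Hi1 [Hs1 [He1 [-> ->]]]]]|[Hf [-> ->]]]
         /stepNB [[i' [Hi1' [Hs1' [He1' [-> ->]]]]]|[Hf' [-> ->]]] //.
  + have E : i = i' by apply: (Hi i i' d); [rewrite -He1|rewrite -He1'].
    by subst i'.
  + by exfalso; apply: (Hf' i Hi1); rewrite -He1.
  + by exfalso; apply: (Hf i' Hi1'); rewrite -He1'.
- by move=> /stepNS [-> ->] /stepNS [-> ->].
Qed.

Lemma run_unique ds s rho1 rho2 : s.1 <> LI -> inj s.2 ->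
  runL s ds rho1 -> runL s ds rho2 -> rho1 = rho2.
Proof.
elim: ds s rho1 rho2 => [|d ds IH] s [|s1 rho1] [|s2 rho2] //= Hl Hi [H1 R1] [H2 R2].
have [E [Hl1 Hi1]] := det Hl Hi H1 H2; subst s2.
by rewrite (IH s1 rho1 rho2).
Qed.

Lemma univL ds : exists rho, accL sI ds rho.
Proof.
case: ds => [|d ds]; first by exists [::].
case: (classic (exists p, Pf p (d :: ds))) => [[p Hp]|Hn].
  have [rho Hr] := Pf_A Hp.
  exists (sA p [:: d] :: rho); apply: accL_cons => //.
  by apply/stepsI; right; exists p.
have : (exists rho, runL (sN [:: d]) ds rho) \/ exists p, Pf p (d :: ds).
  case: (@NA_gen ds [:: d] isT isT) => [H|[d1 [l [rest [H1 [H2 [H3 [H4 E]]]]]]]]; first by left.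
  right; rewrite E -cat_cons; exact: Pf_from_l.
case=> [[rho Hr]|//].
exists (sN [:: d] :: rho); split; first by split => //; apply/stepsI; left.
apply: N_acc Hr; by rewrite /= /locNA; case: ifP.
Qed.

Lemma unambL ds rho1 rho2 : accL sI ds rho1 -> accL sI ds rho2 -> rho1 = rho2.
Proof.
case: ds => [|d ds].
  by case: rho1 => [|? ?] [H1 _]; case: rho2 => [|? ?] [H2 _].
case: rho1 => [|s1 rho1] [//= [H1 R1] A1]; case: rho2 => [|s2 rho2] [//= [H2 R2] A2].
have Hs : s1 = s2.
  move/stepsI: H1 => [E1|[p1 E1]]; move/stepsI: H2 => [E2|[p2 E2]]; subst s1 s2 => //.
  - by exfalso; apply: (N_noPf (A_Pf (conj R2 A2)) R1).
  - by exfalso; apply: (N_noPf (A_Pf (conj R1 A1)) R2).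
  - by rewrite (Pf_uniq (A_Pf (conj R1 A1)) (A_Pf (conj R2 A2))).
subst s2; congr (_ :: _).
apply: (run_unique _ _ R1 R2).
  by move/stepsI: H1 => [->|[p ->]] /=; [exact: locNA_LI|exact: locA_LI].
by move/stepsI: H1 => [->|[p ->]] /=; [exact: inj_uN|exact: inj_uA].
Qed.


Definition Inv (s : stL) : Prop := inj s.2 /\
  match s.1 with
  | LI => s.2 = none
  | LA p t => exists D, uniq D /\ size D = t /\ s.2 = uA p D
  | LB _ => forall i, s.2 i <> None
  | _ => True
  end.

Lemma Inv_sA p D : uniq D -> size D <= K -> Inv (sA p D).
Proof.
move=> Hu Hs; split; first exact: inj_uA.
rewrite /sA /locA; case: ifP => [Hlt|Hge] /=.
  by exists D; rewrite inordK.
have HK : size D = K by apply/eqP; rewrite eqn_leq Hs leqNgt Hge.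
by move=> i; rewrite ffunE HK ltn_ord.
Qed.

Lemma Inv_sN D : uniq D -> Inv (sN D).
Proof. by move=> Hu; split; [exact: inj_uN|rewrite /sN /locNA; case: ifP]. Qed.

Lemma Inv_step s d s' : Inv s -> stepL s d s' -> Inv s'.
Proof.
case: s => l u; case: l => [|p t|j||t|X|] [Hi H] /=.
- move: H => /= ->; rewrite -/sI => /stepsI [->|[p ->]]; [exact: Inv_sN|exact: Inv_sA].
- move: H => /= [D [Hu [Hs Eu]]]; subst u.
  have -> : (LA p t, uA p D) = sA p D by rewrite /sA /locA Hs ltn_ord inord_val.
  have Hlt : size D < K by rewrite Hs ltn_ord.
  move/(stepsA _ _ _ Hlt) => [Hd ->]; apply: Inv_sA; first by rewrite rcons_uniq Hd Hu.
  by rewrite size_rcons.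
- case: s' => l' v' /stepB [_ [-> ->]]; split => //; rewrite /locB; by case: ifP.
- by case: s' => l' v' /stepF [-> ->].
- case: s' => l' v' /stepNA [[Hf [-> ->]]|[_ [-> ->]]] //.
  by split; [exact: inj_upd|rewrite /locNA; case: ifP].
- by case: s' => l' v' /stepNB [[i [_ [_ [_ [-> ->]]]]]|[_ [-> ->]]].
- by case: s' => l' v' /stepNS [-> ->].
Qed.

Lemma Inv_run ds s rho : Inv s -> runL s ds rho -> Inv (last s rho).
Proof.
elim: ds s rho => [|d ds IH] s [|s1 rho] //= Hs [H1 H2].
exact: (IH s1 rho (Inv_step Hs H1) H2).
Qed.

Lemma le_sumn (D : seq nat) x : x \in D -> x <= sumn D.
Proof.
elim: D => [//|y D IH]; rewrite inE /= => /orP [/eqP ->|/IH H]; first exact: leq_addr.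
by rewrite (leq_trans H) // leq_addl.
Qed.

Lemma Inv_acc s : Inv s -> exists ds rho, accL s ds rho.
Proof.
case: s => l u; case: l => [|p t|j||t|X|] [Hi H] /=; try by exists [::], [::].
- move: H => /= [D [Hu [Hs Eu]]]; subst u.
  have -> : (LA p t, uA p D) = sA p D by rewrite /sA /locA Hs ltn_ord inord_val.
  have HsK : size D <= K by rewrite Hs ltnW.
  set d1 := iota (sumn D).+1 (K - size D).
  have Hu' : uniq (D ++ d1).
    rewrite cat_uniq Hu iota_uniq andbT /=; apply/hasPn => x; rewrite mem_iota => /andP [Hx _].
    by apply/negP => /le_sumn Hx'; have := leq_ltn_trans Hx' Hx; rewrite ltnn.
  have Hs' : size (D ++ d1) = K by rewrite size_cat size_iota subnKC.
  set es := [seq odflt 0 (uA p (D ++ d1) (inord q)) | q <- iota 0 K].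
  have Hes : size es = K by rewrite size_map size_iota.
  have Hc : forall q, q < K -> uA p (D ++ d1) (inord q) = Some (nth 0 es q).
    move=> q Hq; rewrite /es (nth_map 0) ?size_iota // nth_iota // add0n.
    by rewrite ffunE Hs' ltn_ord.
  have [rho Hr] := @A_exist d1 p D es [::] Hu' Hs' Hes Hc.
  by exists (d1 ++ es ++ [::]), rho.
- have Hj := ltn_ord j.
  set es := [seq odflt 0 (u (inord (j + q))) | q <- iota 0 (K - j)].
  have Hs : j + size es = K by rewrite size_map size_iota subnKC // ltnW.
  have Hc : forall q, q < size es -> u (inord (j + q)) = Some (nth 0 es q).
    move=> q Hq; have Hq' : q < K - j by move: Hq; rewrite size_map size_iota.
    rewrite /es (nth_map 0) ?size_iota // nth_iota // add0n.
    by case: (u _) (H (inord (j + q))).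
  have [rho Hr] := @B_exist es j u [::] Hs Hc.
  exists (es ++ [::]), rho; move: Hr; by rewrite /sB /locB Hj inord_val.
Qed.


Definition nL := #|{: Loc}|.
Definition enc (l : Loc) : 'I_nL := enum_rank l.
Definition dec (i : 'I_nL) : Loc := enum_val i.
Lemma encK : cancel enc dec. Proof. exact: enum_rankK. Qed.
Lemma decK : cancel dec enc. Proof. exact: enum_valK. Qed.

Definition edges : seq ('I_nL * unit * cst * 'I_nL) :=
  List.flat_map (fun l => List.map (fun pc => (enc l, tt, pc.1, enc pc.2)) (tr l)) (enum {: Loc}).

Lemma In_edges a c b : List.In (a, tt, c, b) edges <-> List.In (c, dec b) (tr (dec a)).
Proof.
split.
  move/List.in_flat_map => [l [_ /(List.in_map_iff _ _ _) [[c' l'] [E Hin]]]].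
  case: E => <- <- <-; by rewrite !encK.
move=> H; apply/List.in_flat_map; exists (dec a); split; first exact: In_enum.
apply/(List.in_map_iff _ _ _); exists (c, dec b); by rewrite /= !decK.
Qed.

Lemma hc_refl (c : cst) : has_conjunct c c.
Proof. by case: c => /= *; left. Qed.

Lemma hc_foldc a l i : List.In i l -> has_conjunct (foldc a l) (a i).
Proof.
elim: l => [//|j l IH] /= [->|H]; first by right; left; apply: hc_refl.
by right; right; apply: IH.
Qed.

Lemma wf_regs f g : edge_constr_wf (CAnd (regs f) g).
Proof.
move=> r; have H := @hc_foldc (fun i => if f i then loadc i else keepc i) _ r (In_enum r).
case E: (f r) H => H.
  by right; right; left; right; left.
by left; right; left.
Qed.

Lemma tr_form l c l' : List.In (c, l') (tr l) -> exists f g, c = CAnd (regs f) g.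
Proof.
have HA : forall p t, List.In (c, l') (trA p t) -> exists f g, c = CAnd (regs f) g.
  by move=> p t [[<- _]|[]]; do 2 eexists.
have HN : forall t, List.In (c, l') (trNA t) -> exists f g, c = CAnd (regs f) g.
  by move=> t [[<- _]|[[<- _]|[]]]; do 2 eexists.
case: l => [|p t|j||t|X|] /=.
- move=> Hin; case: (List.in_app_or (trNA ord0) _ _ Hin); first exact: HN.
  by move/List.in_flat_map => [p [_ /HA]].
- exact: HA.
- by move=> [[<- _]|[]]; do 2 eexists.
- by move=> [[<- _]|[]]; do 2 eexists.
- exact: HN.
- move=> Hin; case: (List.in_app_or _ _ _ Hin).
    by move/(List.in_map_iff _ _ _) => [i [[<- _] _]]; do 2 eexists.
  by move=> [[<- _]|[]]; do 2 eexists.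
- by move=> [[<- _]|[]]; do 2 eexists.
Qed.

Lemma edges_wf a x c b : List.In (a, x, c, b) edges -> edge_constr_wf c.
Proof.
case: x => /In_edges /tr_form [f [g ->]]; exact: wf_regs.
Qed.

Definition AA : RA K unit nL :=
  @MkRA K unit nL (enc LI) (fun i => acc (dec i)) edges edges_wf.

Definition decS (s : 'I_nL * vl) : stL := (dec s.1, s.2).
Definition encS (s : stL) : 'I_nL * vl := (enc s.1, s.2).
Lemma encSK : cancel encS decS. Proof. by case=> l u; rewrite /decS /= encK. Qed.
Lemma decSK : cancel decS encS. Proof. by case=> l u; rewrite /encS /= decK. Qed.

Lemma step_corr s x s' : step AA s x s' <-> stepL (decS s) x.2 (decS s').
Proof.
case: x => [[] d]; rewrite /step /stepL /=; split.
  by move=> [c [/In_edges H1 H2]]; exists c.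
by move=> [c [H1 H2]]; exists c; split => //; apply/In_edges.
Qed.

Lemma run_corr w s rho : run_from AA s w rho <-> runL (decS s) (map snd w) (map decS rho).
Proof.
elim: w s rho => [|x w IH] s [|s1 rho] //=.
by rewrite step_corr IH.
Qed.

Lemma acc_corr w s rho : accepting_run AA s w rho <-> accL (decS s) (map snd w) (map decS rho).
Proof.
rewrite /accepting_run /accL run_corr last_map /=; by split => -[H1 H2].
Qed.

Lemma wK (w : word unit) : map (pair tt) (map snd w) = w.
Proof. by elim: w => [//|[[] d] w IH] /=; rewrite IH. Qed.

Lemma init_eq : init_state AA = encS sI.
Proof. by []. Qed.

Lemma accepts_of s ds rhoL : accL (decS s) ds rhoL ->
  accepting_run AA s (map (pair tt) ds) (map encS rhoL).
Proof.
move=> H; apply/acc_corr; rewrite -map_comp (map_comp snd (pair tt)) /=.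
have -> : map snd (map (pair tt) ds) = ds by elim: ds {H} => //= d ds ->.
by rewrite -map_comp (eq_map encSK) map_id.
Qed.


Lemma Inv_sI : Inv sI.
Proof. by split => // i j d; rewrite ffunE. Qed.

Lemma clean_AA : clean AA.
Proof.
move=> s [w [rho [Hr Hl]]].
move/run_corr: Hr; rewrite init_eq encSK => Hr.
have HI0 := Inv_run Inv_sI Hr.
have HI : Inv (decS s) by rewrite -Hl -last_map init_eq encSK.
split.
  have [ds [rhoL H]] := Inv_acc HI.
  by exists (map (pair tt) ds), (map encS rhoL); apply: accepts_of.
move=> i j d Hij Hi Hj; move: HI => [Hinj _].
by move/negP: Hij; apply; apply/eqP; apply: (Hinj i j d).
Qed.

Lemma univ_AA : universal AA.
Proof.
move=> w; have [rhoL H] := univL (map snd w).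
exists (map encS rhoL); rewrite -(wK w); apply: accepts_of.
by rewrite init_eq encSK.
Qed.

Lemma unamb_AA : unambiguous AA.
Proof.
move=> w rho1 rho2 /acc_corr H1 /acc_corr H2.
rewrite init_eq encSK in H1 H2.
have E := unambL H1 H2.
by rewrite -[rho1](mapK decSK) -[rho2](mapK decSK) E.
Qed.

Lemma uA_iota_inj : injective (fun p => uA p (iota 0 K)).
Proof.
move=> p1 p2 /ffunP E; apply: invg_inj; apply/permP => i.
have := E i; rewrite !ffunE size_iota !ltn_ord !nth_iota ?ltn_ord // !add0n => -[E'].
exact: ord_inj.
Qed.

Lemma conf_AA : exists (w : word unit) (l : 'I_nL) (us : seq vl),
  uniq us /\ K`! <= size us /\ (forall u, u \in us -> in_conf AA w (l, u)).
Proof.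
exists (map (pair tt) (iota 0 K)), (enc (LB (inord 0))),
  [seq uA p (iota 0 K) | p <- enum {perm 'I_K}].
split; first by rewrite map_inj_uniq ?enum_uniq //; exact: uA_iota_inj.
split; first by rewrite size_map -cardE cp.
move=> u /mapP [p _ ->].
have Hsz : size ([:: 0] ++ iota 1 k') <= K by rewrite /= size_iota.
have [rhoA [HrA HlA]] := @A_run (iota 1 k') p [:: 0] (iota_uniq 0 K) Hsz.
exists (map encS (sA p [:: 0] :: rhoA)); split.
  apply/run_corr; rewrite (mapK encSK).
  have -> : map snd (map (pair tt) (iota 0 K)) = iota 0 K by elim: (iota 0 K) => //= d ds ->.
  rewrite init_eq encSK; split => //; apply/stepsI; right; by exists p.
rewrite init_eq last_map /= HlA.
have -> : [:: 0] ++ iota 1 k' = iota 0 K by [].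
by rewrite /sA /encS size_iota /locA ltnn.
Qed.

End S.

Theorem lemma2 :
  forall k : nat, 1 <= k ->
  exists (n : nat) (A : RA k unit n),
    clean A /\ universal A /\ unambiguous A /\
    exists (w : word unit) (l : 'I_n) (us : seq (valuation k)),
      uniq us /\ k`! <= size us /\
      (forall u, u \in us -> in_conf A w (l, u)).
Proof.
case=> [//|k'] _.
exists (nL k'), (AA k'); split; first exact: clean_AA.
split; first exact: univ_AA.
split; first exact: unamb_AA.
exact: conf_AA.
Qed.
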